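(* For every $\lambda>\lambda^*$, $G(e(\lambda))>0$ and $e(\lambda)<0$.
   Context: Standing setup. Let $\gamma>0$; let $a_1,\dots,a_p>0$ with weights $\omega_i>0$, $\sum_i\omega_i=1$, and $b_1,\dots,b_n>0$ with weights $\pi_j>0$, $\sum_j\pi_j=1$. Let $\mu$ be the limiting spectral distribution of $\mathbf{N}\mathbf{N}^T$ where $\mathbf{N}=\mathbf{A}^{1/2}\mathbf{G}\mathbf{B}^{1/2}$ is $k\times l$, $\mathbf{G}$ has iid mean-zero entries of variance $1/l$, $k/l\to\gamma$, and the spectral distributions of $\mathbf{A},\mathbf{B}$ converge to $\nu=\sum_i\omega_i\delta_{a_i}$ and $\underline{\nu}=\sum_j\pi_j\delta_{b_j}$. $\mu$ is a compactly supported probability measure on $[0,\infty)$; $\lambda^*>0$ is the right endpoint of its support, and $s(\lambda)=\int\frac{d\mu(t)}{t-\lambda}$ for $\lambda>\lambda^*$. Define $G(e)=\sum_{j=1}^n\frac{b_j\pi_j}{1+\gamma b_j e}$. It is known (master equations) that there is a continuous (indeed smooth) real function $e(\lambda)$ on $(\lambda^*,\infty)$, never equal to a pole $-1/(\gamma b_j)$ of $G$ and with $a_iG(e(\lambda))\ne\lambda$, satisfying $s(\lambda)=\sum_{i=1}^p\frac{\omega_i}{a_iG(e(\lambda))-\lambda}$ and $e(\lambda)=\sum_{i=1}^p\frac{a_i\omega_i}{a_iG(e(\lambda))-\lambda}$. *)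

(* Defs.v *)
From Stdlib Require Import Reals Lra Lia.
Open Scope R_scope.

Fixpoint rsum (n : nat) (f : nat -> R) : R :=
  match n with
  | O => 0
  | S k => rsum k f + f k
  end.

Definition Gfun (gamma : R) (n : nat) (b pi : nat -> R) (e : R) : R :=
  rsum n (fun j => b j * pi j / (1 + gamma * b j * e)).

(* F is the distribution function t |-> mu((-oo,t]) of a probability measure
   mu on [0, +oo) : nondecreasing, right-continuous, 0 on (-oo,0),
   tending to 1 at +oo. *)
Definition cdf_on_nonneg (F : R -> R) : Prop :=
  (forall s t, s <= t -> F s <= F t) /\
  (forall t eps, 0 < eps -> exists delta, 0 < delta /\
      forall u, t <= u < t + delta -> F u - F t < eps) /\
  (forall t, t < 0 -> F t = 0) /\
  (forall eps, 0 < eps -> exists M, forall t, M <= t -> 1 - F t < eps).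

(* lstar is the right endpoint of the support of mu (in particular the
   support is compact): mu((lstar,+oo)) = 0 and mu((t,+oo)) > 0 for t < lstar *)
Definition support_right_endpoint (F : R -> R) (lstar : R) : Prop :=
  (forall t, lstar <= t -> F t = 1) /\ (forall t, t < lstar -> F t < 1).

Definition is_partition (a b : R) (m : nat) (x : nat -> R) : Prop :=
  x O = a /\ x m = b /\ (forall i, (i < m)%nat -> x i <= x (S i)).

Definition RS_sum (f F : R -> R) (m : nat) (x xi : nat -> R) : R :=
  rsum m (fun i => f (xi i) * (F (x (S i)) - F (x i))).

Definition RS_integral (f F : R -> R) (a b I : R) : Prop :=
  forall eps, 0 < eps -> exists delta, 0 < delta /\
    forall (m : nat) (x xi : nat -> R),
      is_partition a b m x ->
      (forall i, (i < m)%nat -> x i <= xi i <= x (S i)) ->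
      (forall i, (i < m)%nat -> x (S i) - x i < delta) ->
      Rabs (RS_sum f F m x xi - I) < eps.

(* Main.v *)
Require Import Defs.
From Stdlib Require Import Reals.
From Stdlib Require Import Lra Lia Psatz.
Open Scope R_scope.

Lemma inv_neg_mono (u v : R) : u <= v -> v < 0 -> / v <= / u.
Proof.
  intros H1 H2.
  replace (/ v) with (- / (- v)) by (rewrite Rinv_opp; ring).
  replace (/ u) with (- / (- u)) by (rewrite Rinv_opp; ring).
  apply Ropp_le_contravar. apply Rinv_le_contravar; lra.
Qed.

Lemma rsum_pos (n : nat) (f : nat -> R) :
  (0 < n)%nat -> (forall j, (j < n)%nat -> 0 < f j) -> 0 < rsum n f.
Proof.
  induction n as [|k IH]; intros Hn Hf; [lia|].
  simpl. destruct k as [|k'].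
  - simpl. specialize (Hf 0%nat ltac:(lia)). lra.
  - assert (0 < rsum (S k') f) by (apply IH; [lia| intros; apply Hf; lia]).
    specialize (Hf (S k') ltac:(lia)). lra.
Qed.

Lemma master_alg (p : nat) (a omega : nat -> R) (g l : R) :
  (forall i, (i < p)%nat -> a i * g - l <> 0) ->
  rsum p (fun i => a i * omega i / (a i * g - l)) * g
  - l * rsum p (fun i => omega i / (a i * g - l)) = rsum p omega.
Proof.
  induction p as [|k IH]; intros H; simpl; [ring|].
  rewrite <- IH by (intros; apply H; lia).
  assert (Hk := H k ltac:(lia)).
  field. exact Hk.
Qed.

Lemma s_bound (F : R -> R) (lstar l s0 : R) :
  cdf_on_nonneg F -> support_right_endpoint F lstar -> 0 < lstar -> lstar < l ->
  RS_integral (fun t => / (t - l)) F (-1) lstar s0 -> 1 + l * s0 < 0.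
Proof.
  intros [Hmono [_ [Hneg _]]] [Hend Hlt] Hls Hl HI.
  set (c := lstar / 2).
  assert (Hc0 : 0 < c) by (unfold c; lra).
  assert (Hcl : c < lstar) by (unfold c; lra).
  assert (HFc : F c < 1) by (apply Hlt; lra).
  assert (HFc0 : 0 <= F c) by (rewrite <- (Hneg (-1)) by lra; apply Hmono; lra).
  set (D := / (c - l) + / l).
  assert (HD : D < 0).
  { unfold D. assert (/ (c - l) < - / l).
    { replace (/ (c - l)) with (- / (l - c)) by (rewrite <- Rinv_opp; f_equal; ring).
      apply Ropp_lt_contravar. apply Rinv_lt_contravar; [apply Rmult_lt_0_compat|]; lra. }
    lra. }
  set (h := fun t => Rmax (F t - F c) 0).
  set (eps := - (D * (1 - F c)) / 2).
  assert (Heps : 0 < eps).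
  { unfold eps. assert (0 < - D * (1 - F c)) by (apply Rmult_lt_0_compat; lra). lra. }
  destruct (HI eps Heps) as [delta [Hdel Hpart]].
  destruct (archimed_cor1 (delta / (lstar + 1))) as [m [Hm Hm0]].
  { apply Rdiv_lt_0_compat; lra. }
  assert (HmR : 0 < INR m) by (apply lt_0_INR; lia).
  set (x := fun i : nat => -1 + INR i * ((lstar + 1) / INR m)).
  assert (Hstep : forall i, x (S i) - x i = (lstar + 1) / INR m).
  { intros i. unfold x. rewrite S_INR. ring. }
  assert (Hstep0 : 0 < (lstar + 1) / INR m) by (apply Rdiv_lt_0_compat; lra).
  assert (Hx0 : x 0%nat = -1) by (unfold x; simpl; ring).
  assert (Hxm : x m = lstar) by (unfold x; field; lra).
  assert (Hxmono : forall i j, (i <= j)%nat -> x i <= x j).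
  { intros i j Hij. unfold x. assert (INR i <= INR j) by (apply le_INR; lia).
    apply Rplus_le_compat_l. apply Rmult_le_compat_r; lra. }
  assert (Hxle : forall i, (i <= m)%nat -> x i <= lstar).
  { intros i Hi. rewrite <- Hxm. apply Hxmono; lia. }
  assert (Hsum : forall k, (k <= m)%nat ->
    RS_sum (fun t => / (t - l)) F k x (fun i => x (S i)) <=
    - / l * (F (x k) - F (x 0%nat)) + D * (h (x k) - h (x 0%nat))).
  { induction k as [|k IH]; intros Hk.
    - unfold RS_sum; simpl. lra.
    - unfold RS_sum in *; simpl. specialize (IH ltac:(lia)).
      assert (Hxk : x k <= x (S k)) by (apply Hxmono; lia).
      assert (HxSk : x (S k) <= lstar) by (apply Hxle; lia).
      assert (HdF : F (x k) <= F (x (S k))) by (apply Hmono; lra).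
      assert (Hterm : / (x (S k) - l) * (F (x (S k)) - F (x k)) <=
          - / l * (F (x (S k)) - F (x k)) + D * (h (x (S k)) - h (x k))).
      { destruct (Rlt_le_dec (x (S k)) 0) as [Hn|Hp].
        - rewrite (Hneg (x (S k))) by lra. rewrite (Hneg (x k)) by lra.
          unfold h. rewrite (Hneg (x (S k))) by lra. rewrite (Hneg (x k)) by lra.
          rewrite (Rmax_right (0 - F c) 0) by lra. lra.
        - assert (Hf1 : / (x (S k) - l) <= - / l).
          { rewrite <- Rinv_opp. apply inv_neg_mono; lra. }
          destruct (Rlt_le_dec (x (S k)) c) as [Hc|Hc].
          + assert (F (x (S k)) <= F c) by (apply Hmono; lra).
            assert (F (x k) <= F c) by (apply Hmono; lra).
            unfold h. rewrite (Rmax_right (F (x (S k)) - F c) 0) by lra.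
            rewrite (Rmax_right (F (x k) - F c) 0) by lra.
            assert (/ (x (S k) - l) * (F (x (S k)) - F (x k)) <=
                    - / l * (F (x (S k)) - F (x k))) by
              (apply Rmult_le_compat_r; lra).
            lra.
          + assert (Hf2 : / (x (S k) - l) <= / (c - l)) by (apply inv_neg_mono; lra).
            assert (F c <= F (x (S k))) by (apply Hmono; lra).
            assert (Hh1 : h (x (S k)) = F (x (S k)) - F c)
              by (unfold h; apply Rmax_left; lra).
            assert (Hh2 : F (x k) - F c <= h (x k)) by (unfold h; apply Rmax_l).
            assert (Hh3 : 0 <= h (x k)) by (unfold h; apply Rmax_r).
            assert (/ (x (S k) - l) * (F (x (S k)) - F (x k)) <=
                    / (c - l) * (F (x (S k)) - F (x k))) by
              (apply Rmult_le_compat_r; lra).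
            assert (Hdh : h (x (S k)) - h (x k) <= F (x (S k)) - F (x k)) by lra.
            assert (D * (F (x (S k)) - F (x k)) <= D * (h (x (S k)) - h (x k))).
            { apply Rmult_le_compat_neg_l; lra. }
            unfold D in *. lra. }
      lra. }
  specialize (Hsum m (le_n m)).
  rewrite Hx0, Hxm in Hsum.
  assert (HF1 : F lstar = 1) by (apply Hend; lra).
  assert (HFm1 : F (-1) = 0) by (apply Hneg; lra).
  assert (Hh0 : h (-1) = 0) by (unfold h; rewrite HFm1; apply Rmax_right; lra).
  assert (Hhl : h lstar = 1 - F c) by (unfold h; rewrite HF1; apply Rmax_left; lra).
  rewrite HF1, HFm1, Hh0, Hhl in Hsum.
  assert (Hab := Hpart m x (fun i => x (S i))).
  assert (Happ : Rabs (RS_sum (fun t => / (t - l)) F m x (fun i => x (S i)) - s0) < eps).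
  { apply Hab.
    - split; [exact Hx0|split; [exact Hxm|]]. intros i _. apply Hxmono; lia.
    - intros i _. split; [apply Hxmono; lia | lra].
    - intros i _. rewrite Hstep.
      assert ((lstar + 1) * / INR m < (lstar + 1) * (delta / (lstar + 1)))
        by (apply Rmult_lt_compat_l; lra).
      unfold Rdiv at 1. replace (delta) with ((lstar + 1) * (delta / (lstar + 1)))
        by (field; lra). lra. }
  apply Rabs_def2 in Happ. destruct Happ as [Ha1 Ha2].
  assert (Hs0 : s0 < - / l + D * (1 - F c) / 2) by (unfold eps in *; lra).
  assert (Hl0 : 0 < l) by lra.
  assert (l * s0 < l * (- / l + D * (1 - F c) / 2)) by (apply Rmult_lt_compat_l; lra).
  replace (l * (- / l + D * (1 - F c) / 2)) with (-1 + l * (D * (1 - F c) / 2))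
    in H by (field; lra).
  assert (0 < l * (- (D * (1 - F c)) / 2)).
  { apply Rmult_lt_0_compat; [lra|]. assert (0 < - D * (1 - F c)) by (apply Rmult_lt_0_compat; lra). lra. }
  lra.
Qed.

Theorem corollary3p5
  (gamma : R) (p : nat) (a omega : nat -> R) (n : nat) (b pi : nat -> R)
  (F : R -> R) (lstar : R) (s e : R -> R)
  (Hgamma : 0 < gamma)
  (Ha : forall i, (i < p)%nat -> 0 < a i)
  (Homega : forall i, (i < p)%nat -> 0 < omega i)
  (Homega1 : rsum p omega = 1)
  (Hb : forall j, (j < n)%nat -> 0 < b j)
  (Hpi : forall j, (j < n)%nat -> 0 < pi j)
  (Hpi1 : rsum n pi = 1)
  (HF : cdf_on_nonneg F)
  (Hlstar : support_right_endpoint F lstar)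
  (Hlstar_pos : 0 < lstar)
  (Hs : forall l, lstar < l -> RS_integral (fun t => / (t - l)) F (-1) lstar (s l))
  (He_cont : forall l, lstar < l -> continuity_pt e l)
  (He_pole : forall l j, lstar < l -> (j < n)%nat -> e l <> - / (gamma * b j))
  (He_ne : forall l i, lstar < l -> (i < p)%nat -> a i * Gfun gamma n b pi (e l) <> l)
  (Hmaster_s : forall l, lstar < l ->
     s l = rsum p (fun i => omega i / (a i * Gfun gamma n b pi (e l) - l)))
  (Hmaster_e : forall l, lstar < l ->
     e l = rsum p (fun i => a i * omega i / (a i * Gfun gamma n b pi (e l) - l))) :
  forall l, lstar < l -> 0 < Gfun gamma n b pi (e l) /\ e l < 0.
Proof.
  intros l Hl.
  set (g := Gfun gamma n b pi (e l)).
  assert (Hsl := s_bound F lstar l (s l) HF Hlstar Hlstar_pos Hl (Hs l Hl)).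
  assert (Hge : g * e l - l * s l = 1).
  { rewrite Hmaster_e by exact Hl. rewrite Hmaster_s by exact Hl.
    fold g. rewrite <- Homega1. rewrite (Rmult_comm g).
    apply master_alg. intros i Hi. specialize (He_ne l i Hl Hi). fold g in He_ne. lra. }
  assert (Hneg : g * e l < 0) by lra.
  assert (Hn : (0 < n)%nat) by (destruct n; [simpl in Hpi1; lra | lia]).
  destruct (Rlt_le_dec (e l) 0) as [Hel|Hel].
  - split; [|exact Hel].
    destruct (Rlt_le_dec 0 g) as [|Hg]; [assumption|].
    assert (0 <= g * e l) by nra. lra.
  - exfalso.
    assert (Hgp : 0 < g).
    { unfold g, Gfun. apply rsum_pos; [exact Hn|]. intros j Hj.
      assert (0 <= gamma * b j * e l).
      { apply Rmult_le_pos; [apply Rmult_le_pos|]; [lra | left; apply Hb; exact Hj | lra]. }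
      apply Rdiv_lt_0_compat; [apply Rmult_lt_0_compat; [apply Hb|apply Hpi]; exact Hj | lra]. }
    assert (0 <= g * e l) by (apply Rmult_le_pos; lra). lra.
Qed.
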